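(* Let $G$ be a graph with maximum degree $\Delta$. Then $\chi_{ei}(G)\le \Delta(\Delta-1)^2+1$. This bound is attained (with equality) by every odd cycle $C_n$ with $n\ge 5$.
   Context: All graphs are finite and simple. A path $P_4$ in $G$ is a sequence $uxyv$ of four distinct vertices with $ux,xy,yv\in E(G)$; $u,v$ are its end vertices. An $e$-injective $k$-coloring of $G$ is a function $f:V(G)\to\{1,\dots,k\}$ with $f(u)\ne f(v)$ whenever $u,v$ are the end vertices of some path $P_4$ in $G$; $\chi_{ei}(G)$ is the least such $k$. $C_n$ is the cycle on $n$ vertices. *)

(* Defs.v *)
From mathcomp Require Import all_boot.
Set Implicit Arguments. Unset Strict Implicit. Unset Printing Implicit Defensive.

(* A finite simple graph: vertex type T : finType, adjacency e : rel T,
   assumed symmetric and irreflexive (hypotheses in the theorem). *)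

Definition deg (T : finType) (e : rel T) (x : T) : nat := #|[set y | e x y]|.

(* maximum degree Delta(G) (0 for the empty graph) *)
Definition maxdeg (T : finType) (e : rel T) : nat := \max_(x : T) deg e x.

Definition isP4 (T : finType) (e : rel T) (u x y v : T) : bool :=
  [&& uniq [:: u; x; y; v], e u x, e x y & e y v].

(* there is an e-injective k-coloring f : T -> 'I_k (colors {0..k-1},
   a relabelling of {1..k}) *)
Definition ei_colorable (T : finType) (e : rel T) (k : nat) : bool :=
  [exists f : {ffun T -> 'I_k}, forall u, forall x, forall y, forall v,
      isP4 e u x y v ==> (f u != f v)].

Lemma ei_colorable_card (T : finType) (e : rel T) : ei_colorable e #|T|.
Proof.
apply/existsP; exists [ffun x => enum_rank x].
apply/forallP=> u; apply/forallP=> x; apply/forallP=> y; apply/forallP=> v.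
apply/implyP=> /andP[Hu _]; rewrite !ffunE.
move: Hu => /= /andP[Hu _]; rewrite !inE !negb_or in Hu.
case/and3P: Hu => _ _ Huv.
by apply: contra Huv => /eqP /enum_rank_inj ->.
Qed.

Lemma ei_colorable_ex (T : finType) (e : rel T) : exists k, ei_colorable e k.
Proof. by exists #|T|; exact: ei_colorable_card. Qed.

Definition chi_ei (T : finType) (e : rel T) : nat := ex_minn (ei_colorable_ex e).

Definition cycle_rel (n : nat) : rel 'I_n :=
  fun i j => (j == (i.+1 %% n) :> nat) || (i == (j.+1 %% n) :> nat).
Arguments cycle_rel : clear implicits.

(* Main.v *)
Require Import Defs.
From mathcomp Require Import all_boot zify.
Set Implicit Arguments. Unset Strict Implicit.

Lemma card_bigcup_le (I T : finType) (A : {set I}) (F : I -> {set T}) :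
  #|\bigcup_(i in A) F i| <= \sum_(i in A) #|F i|.
Proof.
elim/big_rec2: _ => [|i U s _ H]; first by rewrite cards0.
exact: leq_trans (leq_card_setU _ _) (leq_add _ H).
Qed.

Lemma greedy (T : finType) (c : rel T) (D : nat) :
  symmetric c -> irreflexive c -> (forall u, #|[set v | c u v]| <= D) ->
  exists f : T -> 'I_D.+1, forall u v, c u v -> f u != f v.
Proof.
move=> csym cirr cdeg.
suff H: forall S : {set T}, exists f : T -> 'I_D.+1,
    forall u v, u \in S -> v \in S -> c u v -> f u != f v.
  by have [f Hf] := H setT; exists f => u v; apply: Hf; rewrite in_setT.
move=> S; move: {2}#|S| (erefl #|S|) => m; elim: m S => [|m IH] S HS.
  exists (fun _ => ord0) => u v; move: HS => /eqP; rewrite cards_eq0 => /eqP ->.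
  by rewrite in_set0.
have: 0 < #|S| by rewrite HS.
case/card_gt0P => x xS.
have HS' : #|S :\ x| = m by move: HS; rewrite (cardsD1 x) xS => -[].
have [f Hf] := IH _ HS'.
set U := f @: [set v in S :\ x | c x v].
have HU : #|U| <= D.
  apply: leq_trans (leq_imset_card _ _) _; apply: leq_trans (cdeg x).
  by apply: subset_leq_card; apply/subsetP => v; rewrite !inE => /andP[].
have : 0 < #|~: U|.
  have := cardsC U; rewrite card_ord => E; rewrite -(ltn_add2l #|U|) E addn0.
  by rewrite ltnS.
case/card_gt0P => col; rewrite inE => colU.
have key : forall v, v \in S -> v != x -> c x v -> col != f v.
  move=> v vS vx cxv; apply: contra colU => /eqP ->.
  by apply: imset_f; rewrite !inE vx vS cxv.
exists (fun v => if v == x then col else f v) => u v uS vS cuv.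
case: (eqVneq u x) => [ux|ux]; case: (eqVneq v x) => [vx|vx].
- by subst; rewrite cirr in cuv.
- by subst; apply: key.
- by subst; rewrite eq_sym; apply: key => //; rewrite csym.
- by apply: Hf => //; rewrite !inE ?ux ?vx.
Qed.

Section P1.
Variables (T : finType) (e : rel T).
Hypotheses (esym : symmetric e) (eirr : irreflexive e).

Definition conf : rel T := fun u v => [exists x, exists y, isP4 e u x y v].

Lemma conf_sym : symmetric conf.
Proof.
suff H: forall u v, conf u v -> conf v u.
  by move=> u v; apply/idP/idP; apply: H.
move=> u v /existsP[x /existsP[y /and4P[Hu e1 e2 e3]]].
apply/existsP; exists y; apply/existsP; exists x; apply/and4P; split.
- by rewrite -rev_uniq.
- by rewrite esym.
- by rewrite esym.
- by rewrite esym.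
Qed.

Lemma conf_irr : irreflexive conf.
Proof.
move=> u; apply/negbTE/negP; case/existsP => x /existsP[y /and4P[Hu _ _ _]].
by move: Hu; rewrite /= !inE eqxx !orbT.
Qed.

Definition N (z : T) := [set w | e z w].

Lemma deg_le z : deg e z <= maxdeg e.
Proof. rewrite /maxdeg; exact: (@leq_bigmax T (fun x => deg e x) z). Qed.

Lemma cardND z w : w \in N z -> #|N z :\ w| <= maxdeg e - 1.
Proof.
move=> wz; have := cardsD1 w (N z); rewrite wz => E.
have := deg_le z; rewrite /deg -/(N z) E add1n => H.
by rewrite leq_subRL ?add1n // (leq_trans _ H).
Qed.

Lemma conf_deg u : #|[set v | conf u v]| <= maxdeg e * (maxdeg e - 1) ^ 2.
Proof.
set D := maxdeg e.
have sub : [set v | conf u v] \subset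
   \bigcup_(x in N u) \bigcup_(y in N x :\ u) (N y :\ x).
  apply/subsetP => v; rewrite inE => /existsP[x /existsP[y /and4P[Hu e1 e2 e3]]].
  move: Hu; rewrite /= !inE !negb_or => /andP[/and3P[ux uy uv] /andP[/andP[xy xv] _]].
  apply/bigcupP; exists x; first by rewrite inE.
  apply/bigcupP; exists y; first by rewrite !inE eq_sym uy e2.
  by rewrite !inE e3 eq_sym xv.
apply: (leq_trans (subset_leq_card sub)).
apply: (leq_trans (card_bigcup_le _ _)).
apply: (@leq_trans (\sum_(x in N u) (D - 1) ^ 2)).
  apply: leq_sum => x xu.
  apply: (leq_trans (card_bigcup_le _ _)).
  apply: (@leq_trans (\sum_(y in N x :\ u) (D - 1))).
    apply: leq_sum => y; rewrite !inE => /andP[_ xy].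
    by apply: cardND; rewrite inE esym.
  rewrite sum_nat_const expnS expn1 leq_mul2r; apply/orP; right.
  by apply: cardND; move: xu; rewrite !inE esym.
rewrite sum_nat_const leq_mul2r; apply/orP; right; exact: deg_le.
Qed.

Lemma part1 : chi_ei e <= maxdeg e * (maxdeg e - 1) ^ 2 + 1.
Proof.
have [f Hf] := greedy conf_sym conf_irr conf_deg.
have col : ei_colorable e (maxdeg e * (maxdeg e - 1) ^ 2 + 1).
  rewrite addn1; apply/existsP; exists [ffun x => f x].
  apply/forallP=> u; apply/forallP=> x; apply/forallP=> y; apply/forallP=> v.
  apply/implyP => H; rewrite !ffunE; apply: Hf.
  by apply/existsP; exists x; apply/existsP; exists y.
rewrite /chi_ei; case: ex_minnP => m _ Hm; exact: Hm.
Qed.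
End P1.

Section Cyc.
Variable n : nat.
Hypothesis Hn : 5 <= n.

Let n0 : 0 < n. Proof. by apply: leq_trans Hn. Qed.

Definition ord (k : nat) : 'I_n := Ordinal (ltn_pmod k n0).

Lemma cyc_sym : symmetric (cycle_rel n).
Proof. by move=> i j; rewrite /cycle_rel orbC. Qed.

Lemma cyc_irr : irreflexive (cycle_rel n).
Proof.
move=> i; rewrite /cycle_rel orbb; apply/negbTE.
have := ltn_ord i; rewrite leq_eqVlt => /orP[/eqP E|lt].
  by rewrite E modnn; lia.
by rewrite modn_small //; lia.
Qed.

Lemma step a b : b = a.+1 -> cycle_rel n (ord a) (ord b).
Proof.
move=> ->; rewrite /cycle_rel /=; apply/orP; left.
by rewrite -[(a %% n).+1]addn1 -[a.+1]addn1 modnDml.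
Qed.

Lemma ord_neq m i j : i < n -> j < n -> i != j -> ord (m + i) != ord (m + j).
Proof.
move=> lti ltj ij; apply: contra ij => /eqP /(congr1 val) /= /eqP.
by rewrite eqn_modDl !modn_small.
Qed.

Lemma ord_neq' a b : a < b -> b < a + n -> ord a != ord b.
Proof.
move=> ab ban; have := @ord_neq a 0 (b - a) n0; rewrite addn0 subnKC ?(ltnW ab) //.
apply; lia.
Qed.

Lemma cyc_P4 m : isP4 (cycle_rel n) (ord m) (ord m.+1) (ord m.+2) (ord m.+3).
Proof.
apply/and4P; split; try by apply: step.
rewrite /= !inE !negb_or !ord_neq' //; lia.
Qed.

Lemma not_col k : odd n -> k <= 2 -> ~~ ei_colorable (cycle_rel n) k.
Proof.
move=> on k2; apply/negP => /existsP[f /forallP Hf].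
pose g j := val (f (ord (3 * j))).
have gneq j : g j != g j.+1.
  have := Hf (ord (3 * j)) => /forallP /(_ (ord (3*j).+1)) /forallP
     /(_ (ord (3*j).+2)) /forallP /(_ (ord (3*j).+3)) /implyP /(_ (cyc_P4 _)).
  by rewrite /g; have -> : 3 * j.+1 = (3 * j).+3 by lia.
have glt j : g j < 2 by apply: leq_trans (ltn_ord _) k2.
have gform j : g j = if odd j then 1 - g 0 else g 0.
  elim: j => [//|j IH] /=.
  have := glt 0; have := gneq j; have := glt j; have := glt j.+1; move: IH.
  by case: (odd j) => /=; lia.
have gn : g n = g 0.
  by rewrite /g; congr (val (f _)); apply: val_inj => /=; rewrite mod0n modnMl.
move: (gform n) (glt 0); rewrite on gn; lia.
Qed.

Lemma cyc_deg_le x : deg (cycle_rel n) x <= 2.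
Proof.
have sub : [set y | cycle_rel n x y] \subset [set ord x.+1; ord (x + n.-1)].
  apply/subsetP => y; rewrite !inE /cycle_rel => /orP[/eqP E|/eqP E].
    by apply/orP; left; apply/eqP/val_inj.
  apply/orP; right; apply/eqP/val_inj => /=.
  rewrite E modnDml addSn -addnS prednK // modnDr modn_small //.
apply: leq_trans (subset_leq_card sub) _.
by rewrite cards2; case: (_ != _).
Qed.

Lemma cyc_deg1 : 2 <= deg (cycle_rel n) (ord 1).
Proof.
have sub : [set ord 0; ord 2] \subset [set y | cycle_rel n (ord 1) y].
  apply/subsetP => y; rewrite !inE => /orP[/eqP ->|/eqP ->].
    by rewrite cyc_sym; apply: step.
  by apply: step.
apply: leq_trans (subset_leq_card sub); rewrite cards2 ord_neq' //; lia.
Qed.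

Lemma cyc_maxdeg : maxdeg (cycle_rel n) = 2.
Proof.
apply/eqP; rewrite eqn_leq; apply/andP; split.
  by apply/bigmax_leqP => x _; apply: cyc_deg_le.
apply: leq_trans cyc_deg1 _; exact: (@leq_bigmax _ (fun x => deg (cycle_rel n) x)).
Qed.

Lemma part2 : odd n -> chi_ei (cycle_rel n) =
      maxdeg (cycle_rel n) * (maxdeg (cycle_rel n) - 1) ^ 2 + 1.
Proof.
move=> on; apply/eqP; rewrite eqn_leq (@part1 _ _ cyc_sym) /=.
rewrite cyc_maxdeg /chi_ei; case: ex_minnP => m Hm _.
rewrite ltnNge; apply/negP => m2; have := @not_col m on m2; rewrite Hm.
done.
Qed.
End Cyc.

Theorem proposition2p8 :
  (forall (T : finType) (e : rel T),
      symmetric e -> irreflexive e ->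
      chi_ei e <= maxdeg e * (maxdeg e - 1) ^ 2 + 1)
  /\
  (forall n : nat, 5 <= n -> odd n ->
      chi_ei (cycle_rel n) =
      maxdeg (cycle_rel n) * (maxdeg (cycle_rel n) - 1) ^ 2 + 1).
Proof.
split.
  by move=> T e esym _; exact: part1.
by move=> n Hn on; exact: part2.
Qed.
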